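(* Let $L$ be a multisorted algebra in the positive existential signature satisfying axioms (1), (2), (3), (8), and let $F$ be a prime filter on sort $n$ of $L$. Let $F_1,\dots,F_n$ be distinct symbols and $W=\{F_1,\dots,F_n\}$. Define $\varphi\colon L\to A(W)$ on each sort $k$ by: for each substitution $\alpha\colon k\to n$, $\alpha^{\mathrm{tuple}}(F_1,\dots,F_n)\in\varphi(r)$ if and only if $\alpha(r)\in F$. Then $\varphi$ is an almost morphism.
   Context: Signature. There is a sort $n$ for each $n\ge0$. For every function $\alpha\colon\{1,\dots,n\}\to\{1,\dots,k\}$ there is a unary function symbol (''substitution'') $\alpha\colon n\to k$ (argument of sort $n$, value of sort $k$). Each sort has $0,1,\vee,\wedge$; for each $n$ there is $\exists\colon n+1\to n$ (positive existential signature). For $\alpha\colon k\to n$, $\beta\colon n\to m$, $\beta\circ\alpha$ is the substitution symbol of the composite function. The associated cylindrification of $\exists\colon n+1\to n$ is $c\colon n\to n+1$, $c(i)=i$. For a set $W$: $\alpha^{\mathrm{tuple}}(x_1,\dots,x_k)=(x_{\alpha(1)},\dots,x_{\alpha(n)})$, $\alpha^{\mathrm{relation}}(r)=\{\bar x\in W^k:\alpha^{\mathrm{tuple}}(\bar x)\in r\}$. The positive existential algebra $A(W)$ interprets sort $n$ as $\mathcal P(W^n)$, $\alpha$ as $\alpha^{\mathrm{relation}}$, $0,1,\vee,\wedge$ as $\emptyset,W^n,\cup,\cap$, and $\exists(r)=\{\bar x:\exists y\,(\bar x,y)\in r\}$. Since the $F_i$ are distinct, each $k$-tuple from $W$ is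 $\alpha^{\mathrm{tuple}}(F_1,\dots,F_n)$ for exactly one $\alpha\colon k\to n$. An almost morphism $\varphi\colon L\to A(W)$ is a sort-preserving family of maps commuting with all substitutions and with $0,1,\vee,\wedge$, and satisfying $\exists(\varphi(r))\subseteq\varphi(\exists(r))$ for all $r$. Axioms: (1) each sort is a bounded distributive lattice; (2) substitutions preserve $0,1,\vee,\wedge$; (3) $(\beta\circ\alpha)(r)=\beta(\alpha(r))$; (8) $r\le c(\exists(r))$ for all $r$ of sort $n+1$ (where $x\le y$ means $x=x\wedge y$). A prime filter is a proper, nonempty, upward-closed, $\wedge$-closed subset of a sort with $x\vee y\in F\Rightarrow x\in F$ or $y\in F$. *)

(* Defs.v *)
From mathcomp Require Import all_boot.
Set Implicit Arguments. Unset Strict Implicit. Unset Printing Implicit Defensive.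

(* A substitution symbol alpha : n -> k
   (a function {1..n} -> {1..k}, here 'I_n -> 'I_k) acts from sort n to sort k. *)
Record PEAlg := {
  car  : nat -> Type;
  sub  : forall n k : nat, ('I_n -> 'I_k) -> car n -> car k;
  zero : forall n, car n;
  one  : forall n, car n;
  join : forall n, car n -> car n -> car n;
  meet : forall n, car n -> car n -> car n;
  ex   : forall n, car n.+1 -> car n }.

Arguments sub {p n k} _ _.
Arguments zero {p n}.
Arguments one {p n}.
Arguments join {p n} _ _.
Arguments meet {p n} _ _.
Arguments ex {p n} _.

Definition le (L : PEAlg) n (x y : car L n) : Prop := x = meet x y.

Definition cyl (n : nat) : 'I_n -> 'I_n.+1 := widen_ord (leqnSn n).

Definition axiom1 (L : PEAlg) : Prop :=
  forall n (x y z : car L n),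
    join x (join y z) = join (join x y) z /\
    meet x (meet y z) = meet (meet x y) z /\
    join x y = join y x /\
    meet x y = meet y x /\
    join x (meet x y) = x /\
    meet x (join x y) = x /\
    meet x (join y z) = join (meet x y) (meet x z) /\
    join x zero = x /\
    meet x one = x.

Definition axiom2 (L : PEAlg) : Prop :=
  forall n k (a : 'I_n -> 'I_k),
    [/\ sub a (@zero L n) = zero,
        sub a (@one L n) = one,
        forall x y : car L n, sub a (join x y) = join (sub a x) (sub a y)
      & forall x y : car L n, sub a (meet x y) = meet (sub a x) (sub a y)].

Definition axiom3 (L : PEAlg) : Prop :=
  forall k n m (a : 'I_k -> 'I_n) (b : 'I_n -> 'I_m) (r : car L k),
    sub (b \o a) r = sub b (sub a r).

Definition axiom8 (L : PEAlg) : Prop :=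
  forall n (r : car L n.+1), le r (sub (@cyl n) (ex r)).

Definition prime_filter (L : PEAlg) n (F : car L n -> Prop) : Prop :=
  [/\ (exists x, ~ F x),
      (exists x, F x),
      (forall x y, F x -> le x y -> F y),
      (forall x y, F x -> F y -> F (meet x y))
    & (forall x y, F (join x y) -> F x \/ F y)].

(* The positive existential algebra A(W): sort n is P(W^n). *)
Definition rel (W : Type) (n : nat) := ('I_n -> W) -> Prop.

Definition tuple_sub (W : Type) n k (a : 'I_n -> 'I_k) (x : 'I_k -> W) : 'I_n -> W :=
  fun i => x (a i).

Definition rel_sub (W : Type) n k (a : 'I_n -> 'I_k) (r : rel W n) : rel W k :=
  fun x => r (tuple_sub a x).

Definition snoc (W : Type) n (x : 'I_n -> W) (y : W) : 'I_n.+1 -> W :=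
  fun i => if unlift ord_max i is Some j then x j else y.

Definition rel_ex (W : Type) n (r : rel W n.+1) : rel W n :=
  fun x => exists y, r (snoc x y).

Definition rel0 (W : Type) n : rel W n := fun _ => False.
Definition rel1 (W : Type) n : rel W n := fun _ => True.
Definition rel_join (W : Type) n (r s : rel W n) : rel W n := fun x => r x \/ s x.
Definition rel_meet (W : Type) n (r s : rel W n) : rel W n := fun x => r x /\ s x.

Definition almost_morphism (L : PEAlg) (W : Type) (phi : forall k, car L k -> rel W k) : Prop :=
  (forall n k (a : 'I_n -> 'I_k) (r : car L n), phi k (sub a r) = rel_sub a (phi n r)) /\
  (forall k, phi k zero = @rel0 W k) /\
  (forall k, phi k one = @rel1 W k) /\
  (forall k (r s : car L k), phi k (join r s) = rel_join (phi k r) (phi k s)) /\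
  (forall k (r s : car L k), phi k (meet r s) = rel_meet (phi k r) (phi k s)) /\
  (forall k (r : car L k.+1) x, rel_ex (phi k.+1 r) x -> phi k (ex r) x).

(* W = {F_1,..,F_n} is represented by 'I_n, with F_i := i.  Hence
   (F_1,..,F_n) is the identity tuple and alpha^tuple(F_1..F_n) is alpha itself
   (as a k-tuple 'I_k -> 'I_n); every k-tuple arises from exactly one alpha. *)
Definition Ftuple (n : nat) : 'I_n -> 'I_n := fun i => i.

Definition phiF (L : PEAlg) n (F : car L n -> Prop) (k : nat) (r : car L k) : rel 'I_n k :=
  fun x => exists a : 'I_k -> 'I_n, x = tuple_sub a (@Ftuple n) /\ F (sub a r).

(* Main.v *)
Require Import Defs.
From mathcomp Require Import all_boot.
From Stdlib Require Import FunctionalExtensionality PropExtensionality.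

Lemma phiF_iff (L : PEAlg) n (F : car L n -> Prop) k (r : car L k) x :
  phiF F r x <-> F (sub x r).
Proof.
split; first by move=> [a [-> H]]; exact H.
by move=> H; exists x; split.
Qed.

Lemma relext W k (P Q : Defs.rel W k) : (forall x, P x <-> Q x) -> P = Q.
Proof.
move=> H; apply: functional_extensionality => x; apply: propositional_extensionality; exact: H.
Qed.

Theorem lemma4p8 (L : PEAlg) (n : nat) (F : car L n -> Prop) :
  axiom1 L -> axiom2 L -> axiom3 L -> axiom8 L ->
  prime_filter F ->
  almost_morphism (phiF F).
Proof.
move=> A1 A2 A3 A8 [[y0 Hy0] [x0 Hx0] Fup Fmeet Fprime].
have meetC : forall m (a b : car L m), meet a b = meet b a.
  by move=> m a b; have [_ [_ [_ [H _]]]] := A1 m a b a.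
have joinC : forall m (a b : car L m), join a b = join b a.
  by move=> m a b; have [_ [_ [H _]]] := A1 m a b a.
have absJ : forall m (a b : car L m), meet a (join a b) = a.
  by move=> m a b; have [_ [_ [_ [_ [_ [H _]]]]]] := A1 m a b a.
have absM : forall m (a b : car L m), join a (meet a b) = a.
  by move=> m a b; have [_ [_ [_ [_ [H _]]]]] := A1 m a b a.
have meetA : forall m (a b c : car L m), meet a (meet b c) = meet (meet a b) c.
  by move=> m a b c; have [_ [H _]] := A1 m a b c.
have meet1 : forall m (a : car L m), meet a (@Defs.one L m) = a.
  by move=> m a; have [_ [_ [_ [_ [_ [_ [_ [_ H]]]]]]]] := A1 m a a a.
have join0 : forall m (a : car L m), join a (@Defs.zero L m) = a.
  by move=> m a; have [_ [_ [_ [_ [_ [_ [_ [H _]]]]]]]] := A1 m a a a.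
have meetI : forall m (a : car L m), meet a a = a.
  by move=> m a; rewrite -{2}(absM m a a) absJ.
have le_join_l : forall m (a b : car L m), le a (join a b).
  by move=> m a b; rewrite /le absJ.
have le_meet_l : forall m (a b : car L m), le (meet a b) a.
  by move=> m a b; rewrite /le (meetC _ _ a) meetA meetI.
have nF0 : ~ F (@Defs.zero L n).
  move=> H0; apply: Hy0; apply: (Fup _ _ H0).
  by rewrite /le -[X in meet _ X](join0 _ y0) joinC absJ.
split.
  move=> m k a r; apply: relext => x; rewrite /rel_sub !phiF_iff.
  by rewrite -A3.
split.
  move=> k; apply: relext => x; rewrite phiF_iff /rel0.
  by have [-> _ _ _] := A2 k n x; split.
split.
  move=> k; apply: relext => x; rewrite phiF_iff /rel1.
  have [_ -> _ _] := A2 k n x; split => // _.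
  by apply: (Fup _ _ Hx0); rewrite /le meet1.
split.
  move=> k r s; apply: relext => x; rewrite /rel_join !phiF_iff.
  have [_ _ -> _] := A2 k n x; split; first exact: Fprime.
  case=> H; apply: (Fup _ _ H) => //; rewrite joinC; exact: le_join_l.
split.
  move=> k r s; apply: relext => x; rewrite /rel_meet !phiF_iff.
  have [_ _ _ ->] := A2 k n x; split; last by case; exact: Fmeet.
  move=> H; split; apply: (Fup _ _ H) => //; rewrite meetC; exact: le_meet_l.
move=> k r x [y]; rewrite !phiF_iff => H.
have E : (snoc x y) \o (@cyl k) = x.
  apply: functional_extensionality => i /=.
  rewrite /snoc; case: unliftP => [j Hj|Hj].
    congr x; apply: val_inj => /=; move: Hj => /(congr1 val) /=.
    by rewrite /bump /= leqNgt ltn_ord.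
  by move: Hj => /(congr1 val) /= Hj; move: (ltn_ord i); rewrite Hj ltnn.
apply: (Fup _ _ H).
rewrite -[X in sub X (ex r)]E A3 /le.
have [_ _ _ HM] := A2 _ _ (snoc x y).
by rewrite -HM -A8.
Qed.
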